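(* For every automaton $\mathcal{A}$ and every integer $k\ge1$, the language $\mathfrak{J}_{\exists\boxplus}(\mathcal{A})$ is $k\boxplus$-invariant: if $w\in\mathfrak{J}_{\exists\boxplus}(\mathcal{A})$ and $w_1\sim_{k\boxplus}w$, then $w_1\in\mathfrak{J}_{\exists\boxplus}(\mathcal{A})$. Consequently, the $\omega$-regular language $\{(ab)^\omega\}$ over $\{a,b\}$ is not equal to $\mathfrak{J}_{\exists\boxplus}(\mathcal{B})$ for any automaton $\mathcal{B}$.
   Context: Automata are nondeterministic B\''uchi automata over infinite words; $\mathfrak{L}(\mathcal{A})$ is the accepted language. For finite $x$, $\Psi(x)$ is its Parikh image. For $k\ge1$, $w\sim_{k\boxplus}w'$ means $w=x_1x_2\cdots$, $w'=y_1y_2\cdots$ with $|x_i|=|y_i|=k$ and $\Psi(x_i)=\Psi(y_i)$ for all $i$. $\mathfrak{J}_{\exists\boxplus}(\mathcal{A})=\{w\in\Sigma^\omega:\exists k\ge1\ \exists w'\sim_{k\boxplus}w,\ w'\in\mathfrak{L}(\mathcal{A})\}$. *)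

(* Defs.v *)
From mathcomp Require Import all_boot.
Set Implicit Arguments. Unset Strict Implicit. Unset Printing Implicit Defensive.

Definition oword (Sigma : Type) := nat -> Sigma.

Record buchi (Sigma : finType) := Buchi {
  state : finType;
  init : pred state;
  trans : state -> Sigma -> state -> bool;
  acc : pred state }.
Arguments state {Sigma} b.
Arguments init {Sigma} b _.
Arguments trans {Sigma} b _ _ _.
Arguments acc {Sigma} b _.

Definition accepting_run (Sigma : finType) (A : buchi Sigma) (w : oword Sigma)
  (r : nat -> state A) : Prop :=
  init A (r 0) /\
  (forall i, trans A (r i) (w i) (r i.+1)) /\
  (forall N, exists i, N <= i /\ acc A (r i)).

Arguments accepting_run {Sigma} A w r.

Definition accepts (Sigma : finType) (A : buchi Sigma) (w : oword Sigma) : Prop :=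
  exists r, accepting_run A w r.

Arguments accepts {Sigma} A w.

Definition parikh (Sigma : finType) (x : seq Sigma) : {ffun Sigma -> nat} :=
  [ffun a => count_mem a x].

Definition block (Sigma : Type) (k : nat) (w : oword Sigma) (i : nat) : seq Sigma :=
  [seq w (i * k + j) | j <- iota 0 k].

Definition kblock_equiv (Sigma : finType) (k : nat) (w w' : oword Sigma) : Prop :=
  forall i, parikh (block k w i) = parikh (block k w' i).

Definition J_exists_block (Sigma : finType) (A : buchi Sigma) (w : oword Sigma) : Prop :=
  exists k, 1 <= k /\ exists w', kblock_equiv k w' w /\ accepts A w'.

Arguments J_exists_block {Sigma} A w.
Arguments kblock_equiv {Sigma} k w w'.

(* Alphabet {a,b} encoded as bool: a = true, b = false. *)
Definition letter_a : bool := true.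
Definition letter_b : bool := false.

Definition ab_omega (w : oword bool) : Prop :=
  forall n, w n = (if odd n then letter_b else letter_a).

(* Main.v *)
Require Import Defs.
From mathcomp Require Import all_boot.
Set Implicit Arguments. Unset Strict Implicit.

Definition seg (Sigma : Type) (w : oword Sigma) (s n : nat) : seq Sigma :=
  [seq w (s + j) | j <- iota 0 n].

Lemma seg_cat (Sigma : Type) (w : oword Sigma) s a b :
  seg w s (a + b) = seg w s a ++ seg w (s + a) b.
Proof.
rewrite /seg iotaD map_cat; congr (_ ++ _).
rewrite add0n -[in LHS](addn0 a) iotaDl -map_comp.
by apply: eq_map => j /=; rewrite addnA.
Qed.

Lemma parikh_count (Sigma : finType) (x y : seq Sigma) :
  parikh x = parikh y <-> forall a, count_mem a x = count_mem a y.
Proof.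
split=> [H a|H]; first by have := congr1 (fun f : {ffun Sigma -> nat} => f a) H; rewrite /= !ffunE.
by apply/ffunP => a; rewrite !ffunE.
Qed.

Lemma equiv_mul (Sigma : finType) k m (w w' : oword Sigma) :
  kblock_equiv k w w' -> kblock_equiv (m * k) w w'.
Proof.
move=> H i; apply/parikh_count => a.
have E : forall j, count_mem a (seg w (j * k) (m * k)) = count_mem a (seg w' (j * k) (m * k)).
  elim: m => [|m IH] j; first by rewrite mul0n.
  rewrite mulSn !seg_cat !count_cat.
  have Hj := proj1 (parikh_count _ _) (H j).
  have -> : j * k + k = j.+1 * k by rewrite mulSn addnC.
  by rewrite IH; congr (_ + _); apply: Hj.
have := E (i * m); rewrite -mulnA.
by rewrite /block /seg.
Qed.

Lemma equiv_sym (Sigma : finType) k (w w' : oword Sigma) :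
  kblock_equiv k w w' -> kblock_equiv k w' w.
Proof. by move=> H i; rewrite H. Qed.

Lemma equiv_trans (Sigma : finType) k (w1 w2 w3 : oword Sigma) :
  kblock_equiv k w1 w2 -> kblock_equiv k w2 w3 -> kblock_equiv k w1 w3.
Proof. by move=> H1 H2 i; rewrite H1 H2. Qed.

Lemma part1 (Sigma : finType) (A : buchi Sigma) (k : nat) : 1 <= k ->
     forall w w1 : oword Sigma,
       J_exists_block A w -> kblock_equiv k w1 w -> J_exists_block A w1.
Proof.
move=> hk w w1 [k' [hk' [w' [Hw' Acc]]]] H1.
exists (k * k'); split; first by rewrite muln_gt0 hk hk'.
exists w'; split=> //.
apply: (equiv_trans (equiv_mul k Hw')).
rewrite mulnC; apply: equiv_sym; exact: equiv_mul.
Qed.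

Theorem mainTheorem15 :
  (forall (Sigma : finType) (A : buchi Sigma) (k : nat), 1 <= k ->
     forall w w1 : oword Sigma,
       J_exists_block A w -> kblock_equiv k w1 w -> J_exists_block A w1)
  /\
  (forall B : buchi bool,
     ~ (forall w : oword bool, ab_omega w <-> J_exists_block B w)).
Proof.
split; first exact: part1.
move=> B H.
pose w : oword bool := fun n => ~~ odd n.
pose w1 : oword bool := fun n => odd n.
have Jw : J_exists_block B w by apply/H => n; rewrite /w; case: (odd n).
have E : kblock_equiv 2 w1 w.
  move=> i; apply/parikh_count => a.
  by rewrite /block /w /w1 /= !addn0 addn1 /= oddM andbF; case: a.
have := part1 (k:=2) erefl Jw E.
by move/H => /(_ 0).
Qed.
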